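(* Let $\mu:I\to\mathbb{N}^*$ be a signature. The set $\mathscr{J}(\Omega_\mu)$ of ideals of $\Omega_\mu$, with the topology induced by the product topology on the power set $\mathfrak P(\Omega_\mu)\cong\{0,1\}^{\Omega_\mu}$, is compact if and only if $\mu^{-1}[\mathbb{N}^*\setminus\{1\}]=\{i\in I:\mu_i\ge 2\}$ is finite.
   Context: A relational structure of signature $\mu$ is $(A;(R_i)_{i\in I})$ with $R_i$ a $\mu_i$-ary relation on $A$; embeddings are injective maps preserving and reflecting all relations. $\Omega_\mu$ is the set of isomorphism types of finite structures of signature $\mu$, ordered by embeddability. An ideal of $\Omega_\mu$ is a non-empty, downward closed, up-directed subset. *)

(* Defs.v *)
From HB Require Import structures.
From mathcomp Require Import all_boot all_order.
From mathcomp Require Import all_classical.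
From mathcomp Require Import topology.

Set Implicit Arguments.
Unset Strict Implicit.
Unset Printing Implicit Defensive.

Local Open Scope classical_set_scope.

Section Structures.
Variables (I : Type) (mu : I -> nat).

(* A finite relational structure of signature mu, with domain 'I_dcard
   (every finite structure is isomorphic to one of this form):
   for each i : I, rel i is a mu_i-ary relation on 'I_dcard, i.e. a subset
   of 'I_dcard ^ mu_i. *)
Record fstruct := FStruct {
  dcard : nat;
  rel : forall i : I, {set (mu i).-tuple 'I_dcard} }.

Definition is_embedding (A B : fstruct) (f : 'I_(dcard A) -> 'I_(dcard B)) : Prop :=
  injective f /\
  forall (i : I) (x : (mu i).-tuple 'I_(dcard A)),
    (x \in rel A i) = (map_tuple f x \in rel B i).

Definition embeds (A B : fstruct) : Prop :=
  exists f, @is_embedding A B f.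

Definition isomorphic (A B : fstruct) : Prop :=
  exists f, @is_embedding A B f /\ bijective f.

Definition iso_class (A : fstruct) : set fstruct := [set B | isomorphic A B].

Definition Omega : Type := {C : set fstruct | exists A, C = iso_class A}.

Definition Omega_le (a b : Omega) : Prop :=
  exists A B, proj1_sig a A /\ proj1_sig b B /\ embeds A B.

Definition is_ideal (J : set Omega) : Prop :=
  J !=set0 /\
  (forall a b, Omega_le a b -> J b -> J a) /\
  (forall a b, J a -> J b -> exists2 c, J c & Omega_le a c /\ Omega_le b c).

End Structures.

(* The set of ideals, as a subset of the power set P(Omega_mu) = {0,1}^Omega_mu
   carrying the product (pointwise) topology. *)
Definition ideals (I : Type) (mu : I -> nat) : set {ptws Omega mu -> bool} :=
  [set f | is_ideal [set a | f a]].

(* Main.v *)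
Require Import Defs.
From HB Require Import structures.
From mathcomp Require Import all_boot all_order.
From mathcomp Require Import all_classical.
From mathcomp Require Import topology.
Set Implicit Arguments. Unset Strict Implicit. Unset Printing Implicit Defensive.
Local Open Scope classical_set_scope.

Notation relS := Defs.rel.
Section Comb.
Variables (I : Type) (mu : I -> nat).
Local Notation fs := (fstruct mu).
Local Notation Om := (Omega mu).

Lemma map_tuple_comp n (A B C : Type) (f : A -> B) (g : B -> C) (x : n.-tuple A) :
  map_tuple g (map_tuple f x) = map_tuple (g \o f) x.
Proof. by apply: val_inj; rewrite /= map_comp. Qed.

Lemma is_embedding_id (A : fs) : @is_embedding _ mu A A id.
Proof.
split=> // i x; suff -> : map_tuple id x = x by [].
apply: val_inj; exact: map_id.
Qed.

Lemma is_embedding_comp (A B C : fs) f g :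
  @is_embedding _ mu A B f -> @is_embedding _ mu B C g -> @is_embedding _ mu A C (g \o f).
Proof.
move=> [fi fr] [gi gr]; split; first exact: inj_comp.
by move=> i x; rewrite fr gr map_tuple_comp.
Qed.

Lemma embeds_refl (A : fs) : embeds A A.
Proof. by exists id; apply: is_embedding_id. Qed.

Lemma embeds_trans (A B C : fs) : embeds A B -> embeds B C -> embeds A C.
Proof. by move=> [f fe] [g ge]; exists (g \o f); apply: is_embedding_comp fe ge. Qed.

Lemma iso_refl (A : fs) : isomorphic A A.
Proof. exists id; split; [exact: is_embedding_id| exact: inv_bij]. Qed.

Lemma iso_sym (A B : fs) : isomorphic A B -> isomorphic B A.
Proof.
move=> [f [[fi fr] [g fg gf]]]; exists g; split; last by exists f.
split; first exact: can_inj gf.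
move=> i y; rewrite fr map_tuple_comp.
suff -> : map_tuple (f \o g) y = y by [].
by apply: eq_from_tnth => k; rewrite tnth_map /= gf.
Qed.

Lemma iso_trans (A B C : fs) : isomorphic A B -> isomorphic B C -> isomorphic A C.
Proof.
move=> [f [fe fb]] [g [ge gb]]; exists (g \o f); split.
  exact: is_embedding_comp fe ge.
exact: bij_comp.
Qed.

Lemma iso_embeds (A B : fs) : isomorphic A B -> embeds A B.
Proof. by move=> [f [fe _]]; exists f. Qed.

Definition cls (A : fs) : Om := exist _ (iso_class A) (ex_intro _ A erefl).

Lemma cls_mem (A : fs) : proj1_sig (cls A) A.
Proof. exact: iso_refl. Qed.

Definition rep (a : Om) : fs := projT1 (cid (proj2_sig a)).

Lemma rep_mem (a : Om) : proj1_sig a (rep a).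
Proof.
rewrite /rep; case: (cid _) => A /= ->; exact: iso_refl.
Qed.

Lemma mem_iso (a : Om) (A B : fs) : proj1_sig a A -> proj1_sig a B -> isomorphic A B.
Proof.
case: a => /= C [R eC]; rewrite eC => RA RB.
exact: (iso_trans (iso_sym RA) RB).
Qed.

Lemma le_mem (a b : Om) (A B : fs) : proj1_sig a A -> proj1_sig b B ->
  Omega_le a b <-> embeds A B.
Proof.
move=> aA bB; split; last by move=> e; exists A, B.
move=> [A' [B' [aA' [bB' e]]]].
apply: embeds_trans (iso_embeds (mem_iso aA aA')) _.
exact: embeds_trans e (iso_embeds (mem_iso bB' bB)).
Qed.

Lemma le_rep (a b : Om) : Omega_le a b <-> embeds (rep a) (rep b).
Proof. exact: le_mem (rep_mem a) (rep_mem b). Qed.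

Lemma le_trans (a b c : Om) : Omega_le a b -> Omega_le b c -> Omega_le a c.
Proof. rewrite !le_rep; exact: embeds_trans. Qed.

Lemma le_refl (a : Om) : Omega_le a a.
Proof. rewrite le_rep; exact: embeds_refl. Qed.


Lemma map_tuple_ext n (T1 T2 : Type) (f g : T1 -> T2) (x : n.-tuple T1) :
  f =1 g -> map_tuple f x = map_tuple g x.
Proof. by move=> fg; apply: val_inj => /=; apply: eq_map. Qed.

Lemma map_ffun n (T1 : finType) (T2 : Type) (g : T1 -> T2) (x : n.-tuple T1) :
  map_tuple [ffun y => g y] x = map_tuple g x.
Proof. by apply: map_tuple_ext => y; rewrite ffunE. Qed.

Lemma FStruct_eq n (r1 r2 : forall i, {set (mu i).-tuple 'I_n}) :
  (forall i, r1 i = r2 i) -> @FStruct _ mu n r1 = FStruct r2.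
Proof. by move=> H; congr FStruct; apply: functional_extensionality_dep. Qed.

End Comb.

Section Amalg.
Variables (I : Type) (mu : I -> nat).
Hypothesis mu_pos : forall i, (0 < mu i)%N.
Local Notation fs := (fstruct mu).
Local Notation Om := (Omega mu).
Variables (k : nat) (s : 'I_k -> I).
Hypothesis sS : forall i, (2 <= mu i)%N -> exists j, s j = i.
Variables (A B : fs).

Definition Dat (n : nat) := ({ffun 'I_(dcard A) -> 'I_n} * {ffun 'I_(dcard B) -> 'I_n}
  * {dffun forall j : 'I_k, {set (mu (s j)).-tuple 'I_n}})%type.

Definition Phi n (d : Dat n) : fs := @FStruct _ mu n (fun i =>
  if asbool (2 <= mu i)%N then
    [set t | asbool (exists j, s j = i /\ exists2 u, u \in d.2 j & val u = val t)]%SET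
  else [set t | asbool ((exists x, x \in relS A i /\ map_tuple d.1.1 x = t) \/
                        (exists y, y \in relS B i /\ map_tuple d.1.2 y = t))]%SET).

Lemma amalg (C : fs) f h : @is_embedding _ mu A C f -> @is_embedding _ mu B C h ->
  exists n (d : Dat n), [/\ (n <= dcard A + dcard B)%N, embeds A (Phi d),
     embeds B (Phi d) & embeds (Phi d) C].
Proof.
move=> [fi fr] [hi hr].
pose P : {set 'I_(dcard C)} := [set z | [exists x, f x == z] || [exists y, h y == z]]%SET.
have fP x : f x \in P by rewrite inE; apply/orP; left; apply/existsP; exists x.
have hP y : h y \in P by rewrite inE; apply/orP; right; apply/existsP; exists y.
pose e : 'I_#|P| -> 'I_(dcard C) := enum_val.
pose f' x : 'I_#|P| := enum_rank_in (fP x) (f x).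
pose h' y : 'I_#|P| := enum_rank_in (hP y) (h y).
have ef x : e (f' x) = f x by exact: (enum_rankK_in (fP x) (fP x)).
have eh y : e (h' y) = h y by exact: (enum_rankK_in (hP y) (hP y)).
have ei : injective e by exact: enum_val_inj.
pose C' := @FStruct _ mu #|P| (fun i => [set t | map_tuple e t \in relS C i]%SET).
have eE : @is_embedding _ mu C' C e by split => // i t; rewrite inE.
have f'E : @is_embedding _ mu A C' f'.
  split; first by move=> x y /(congr1 e); rewrite !ef; exact: fi.
  move=> i x; rewrite fr inE map_tuple_comp.
  by rewrite (@map_tuple_ext _ _ _ (e \o f') f) // => y /=; rewrite ef.
have h'E : @is_embedding _ mu B C' h'.
  split; first by move=> x y /(congr1 e); rewrite !eh; exact: hi.
  move=> i x; rewrite hr inE map_tuple_comp.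
  by rewrite (@map_tuple_ext _ _ _ (e \o h') h) // => y /=; rewrite eh.
pose R : {dffun forall j : 'I_k, {set (mu (s j)).-tuple 'I_#|P|}} :=
  finfun (fun j => relS C' (s j)).
pose d : Dat #|P| := ([ffun x => f' x], [ffun y => h' y], R).
have PhiE : Phi d = C'.
  apply: FStruct_eq => i; change (relS (Phi d) i = relS C' i).
  apply/setP => t; rewrite /= -[RHS]/(t \in relS C' i).
  case: (asboolP (2 <= mu i)%N) => Hi; rewrite [in LHS]inE.
    apply/asboolP/idP.
      case=> j [sj [u uin uv]]; subst i.
      rewrite /R ffunE in uin.
      have -> : t = u by apply: val_inj.
      exact: uin.
    move=> tin; have [j sj] := sS Hi; subst i; exists j; split => //.
    by exists t => //; rewrite /R ffunE.
  have mu1 : mu i = 1%N.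
    by move: (mu_pos i) Hi; case: (mu i) => [|[|m]] //.
  apply/asboolP/idP.
    case=> [[x [xin <-]]|[y [yin <-]]].
      by rewrite map_ffun -(f'E.2 i).
    by rewrite map_ffun -(h'E.2 i).
  move=> tin.
  pose q0 : 'I_(mu i) := Ordinal (mu_pos i).
  have tE : forall q : 'I_(mu i), tnth t q = tnth t q0.
    move=> q; congr tnth; apply: val_inj => /=.
    by move: (ltn_ord q); move: (nat_of_ord q) => v; rewrite mu1; case: v.
  have := enum_valP (tnth t q0); rewrite inE => /orP[/existsP[x /eqP ex]|/existsP[y /eqP ey]].
    have f'x : f' x = tnth t q0 by apply: ei; rewrite ef ex.
    have mt : map_tuple f' [tuple x | _ < mu i] = t.
      by apply: eq_from_tnth => q; rewrite tnth_map tnth_mktuple f'x tE.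
    left; exists [tuple x | _ < mu i]; rewrite map_ffun; split => //.
    by rewrite (f'E.2 i) mt.
  have h'y : h' y = tnth t q0 by apply: ei; rewrite eh ey.
  have mt : map_tuple h' [tuple y | _ < mu i] = t.
    by apply: eq_from_tnth => q; rewrite tnth_map tnth_mktuple h'y tE.
  right; exists [tuple y | _ < mu i]; rewrite map_ffun; split => //.
  by rewrite (h'E.2 i) mt.
exists #|P|, d; rewrite PhiE; split.
- have -> : P = ((f @: 'I_(dcard A)) :|: (h @: 'I_(dcard B)))%SET.
    apply/setP => z; rewrite !inE.
    congr orb; apply/existsP/imsetP => [[x /eqP <-]|[x _ ->]]; by exists x.
  rewrite cardsU; apply: leq_trans (leq_subr _ _) _.
  apply: leq_add; apply: leq_trans (leq_imset_card _ _) _; by rewrite card_ord.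
- by exists f'.
- by exists h'.
- by exists e.
Qed.

End Amalg.
Section Topo.
Variable T : Type.
Local Notation X := {ptws T -> bool}.

Lemma proj_nbhs (f : X) (d : T) : nbhs f [set g : X | g d = f d].
Proof.
have := @proj_continuous {classic T} (fun _ => bool) d f.
move=> /(_ [set f d]); apply.
by rewrite nbhs_principalE; apply/principal_filterP.
Qed.

Definition cyl (K : set T) (f : X) : set X := [set g | forall d, K d -> g d = f d].

Lemma nbhs_cyl (f : X) (N : set X) : nbhs f N -> exists2 K, finite_set K & cyl K f `<=` N.
Proof.
pose F := filter_from [set K : set T | finite_set K] (fun K => cyl K f).
have FF : Filter F.
  apply: filter_from_filter; first by exists set0; exact: finite_set0.
  move=> K1 K2 fK1 fK2; exists (K1 `|` K2); first by red; rewrite finite_setU; split.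
  move=> g Hg; split=> d Kd; apply: Hg; by [left|right].
suff : F --> f by move=> /(_ N) H /H [K fK sK]; exists K.
apply/(@cvg_sup _ _ _ F f) => d A.
rewrite nbhsE => -[B [Bop Bf] BA].
case: Bop => U Uop UB.
exists [set d]; first exact: finite_set1.
move=> g Hg; apply: BA; rewrite -UB /=.
rewrite (Hg d erefl).
by move: Bf; rewrite -UB.
Qed.

Lemma cyl_nbhs (f : X) (K : set T) : finite_set K -> nbhs f (cyl K f).
Proof.
move=> /(@finite_seqP {classic T}) [s ->].
elim: s => [|x s IH].
  by apply: filterS filterT => g _ d.
have -> : cyl [set` (x :: s)] f = [set g : X | g x = f x] `&` cyl [set` s] f.
  apply/seteqP; split=> g /=.
    move=> H; split; first by apply: H; rewrite /= inE eqxx.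
    by move=> d sd; apply: H; rewrite /= inE sd orbT.
  move=> [H1 H2] d; rewrite /= inE => /orP[/eqP -> //|sd].
  exact: H2.
apply: filterI => //; exact: proj_nbhs.
Qed.

Lemma closure_cylP (A : set X) (f : X) :
  closure A f <-> forall K, finite_set K -> exists g, A g /\ cyl K f g.
Proof.
split.
  move=> cl K fK; have [g [Ag Kg]] := cl _ (@cyl_nbhs f K fK).
  by exists g.
move=> H B /nbhs_cyl [K fK sK].
have [g [Ag Kg]] := H K fK; exists g; split=> //; exact: sK.
Qed.

Lemma compactT : compact [set: X].
Proof.
have := @tychonoff {classic T} (fun _ => bool) (fun _ => setT) (fun _ => bool_compact).
by congr compact; apply/seteqP; split.
Qed.

Lemma hausdorffX : hausdorff_space X.
Proof.
exact: (@hausdorff_product {classic T} (fun _ => bool) (fun _ => discrete_hausdorff)).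
Qed.
End Topo.

Section Back.
Variables (I : Type) (mu : I -> nat).
Hypothesis mu_pos : forall i, (0 < mu i)%N.
Local Notation fs := (fstruct mu).
Local Notation Om := (Omega mu).

Lemma enumS : finite_set [set i | (2 <= mu i)%N] ->
  exists k (s : 'I_k -> I), forall i, (2 <= mu i)%N -> exists j, s j = i.
Proof.
move=> finS; have [l eS] := (@finite_seqP {classic I} _).1 finS.
exists (size l), (fun j => tnth (in_tuple l) j) => i Hi.
have il : i \in l.
  have : [set i | (2 <= mu i)%N] i by [].
  by rewrite eS.
have il' : (index (i : {classic I}) l < size l)%N by rewrite index_mem.
exists (Ordinal il'); by rewrite (tnth_nth (i : {classic I})) /= nth_index.
Qed.

Definition Mset k (s : 'I_k -> I) (a b : Om) : set Om :=
  [set c | Omega_le a c /\ Omega_le b c /\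
     exists n : 'I_(dcard (rep a) + dcard (rep b)).+1,
     exists d : Dat s (rep a) (rep b) n, c = cls (Phi d)].

Lemma Mset_fin k (s : 'I_k -> I) a b : finite_set (Mset s a b).
Proof.
apply: (@sub_finite_set _ _ (\bigcup_(n in [set: 'I_(dcard (rep a) + dcard (rep b)).+1])
   range (fun d : Dat s (rep a) (rep b) n => cls (Phi d)))).
  move=> c [_ [_ [n [d ->]]]]; by exists n => //; exists d.
apply: bigcup_finite; first exact: finite_finset.
move=> n _; exact: finite_image finite_finset.
Qed.

Lemma Mset_dir k (s : 'I_k -> I) (a b : Om) (J : set Om) :
  (forall i, (2 <= mu i)%N -> exists j, s j = i) ->
  is_ideal J -> J a -> J b -> exists2 c, Mset s a b c & J c.
Proof.
move=> sS [_ [Jdown Jdir]] Ja Jb.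
have [c0 Jc0 [ac0 bc0]] := Jdir a b Ja Jb.
move: ac0 bc0; rewrite !le_rep => -[f fe] [h he].
have [n [d [nle eA eB eC]]] := amalg mu_pos sS fe he.
exists (cls (Phi d)).
  split; first by apply/(le_mem (rep_mem a) (cls_mem _)).
  split; first by apply/(le_mem (rep_mem b) (cls_mem _)).
  have nlt : (n < (dcard (rep a) + dcard (rep b)).+1)%N by [].
  by exists (Ordinal nlt), d.
apply: Jdown Jc0; exact/(le_mem (cls_mem _) (rep_mem c0)).
Qed.

Definition Empty : fs := @FStruct _ mu 0 (fun i => finset.set0).

Lemma bot_le (x : Om) : Omega_le (cls Empty) x.
Proof.
apply/(le_mem (cls_mem _) (rep_mem x)).
have f : 'I_0 -> 'I_(dcard (rep x)) by case.
exists f; split; first by case.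
move=> i t; exfalso; by case: (tnth t (Ordinal (mu_pos i))).
Qed.

Lemma ideals_closed : finite_set [set i | (2 <= mu i)%N] -> closed (@ideals I mu).
Proof.
move=> finS F /closure_cylP cl.
split; [|split].
- have [g [[[x gx] [gd _]] Kg]] := cl [set cls Empty] (finite_set1 _).
  exists (cls Empty); rewrite /= -(Kg _ erefl).
  exact: gd (bot_le x) gx.
- move=> a b ab Fb.
  have [g [[_ [gd _]] Kg]] := cl [set a; b] (finite_set2 a b).
  rewrite /= -(Kg a (or_introl erefl)); apply: gd ab _.
  by rewrite /= (Kg b (or_intror erefl)).
- move=> a b Fa Fb.
  have [k [s sS]] := enumS finS.
  have finK : finite_set ([set a; b] `|` Mset s a b).
    by rewrite finite_setU; split; [exact: finite_set2 | exact: Mset_fin].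
  have [g [gI Kg]] := cl _ finK.
  have ga : g a by rewrite (Kg a (or_introl (or_introl erefl))).
  have gb : g b by rewrite (Kg b (or_introl (or_intror erefl))).
  have [c Mc gc] := Mset_dir sS gI ga gb.
  exists c; first by rewrite /= -(Kg c (or_intror Mc)).
  by case: Mc => [ac [bc _]].
Qed.

Lemma back : finite_set [set i | (2 <= mu i)%N] -> compact (@ideals I mu).
Proof.
move=> finS; have := @subclosed_compact _ (@ideals I mu) setT (ideals_closed finS).
by move=> /(_ (@compactT (Omega mu))); apply.
Qed.
End Back.

Section Fwd.
Variables (I : Type) (mu : I -> nat).
Local Notation fs := (fstruct mu).
Local Notation Om := (Omega mu).

Definition mk2 m n (x y : 'I_n) : m.-tuple 'I_n :=
  [tuple (if val k == 0%N then x else y) | k < m].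

Lemma tnth_mk2 m n (x y : 'I_n) k : tnth (mk2 m x y) k = if val k == 0%N then x else y.
Proof. by rewrite tnth_mktuple. Qed.

Lemma map_mk2 m n n' (g : 'I_n -> 'I_n') x y :
  map_tuple g (mk2 m x y) = mk2 m (g x) (g y).
Proof. by apply: eq_from_tnth => k; rewrite tnth_map !tnth_mk2; case: eqP. Qed.

Lemma map_tuple_inj m (T1 T2 : eqType) (g : T1 -> T2) :
  injective g -> injective (@map_tuple m _ _ g).
Proof. by move=> gi x y /(congr1 val) /= /(inj_map gi) H; apply: val_inj. Qed.

Lemma map_neq_mk2_1 m n n' (g : 'I_n -> 'I_n') (t : m.-tuple 'I_n) u v :
  (1 < m)%N -> (forall z, g z != v) -> map_tuple g t != mk2 m u v.
Proof.
move=> m1 gv; apply/eqP => /(congr1 (fun w => tnth w (Ordinal m1))).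
rewrite tnth_map tnth_mk2 /= => E.
by move: (gv (tnth t (Ordinal m1))); rewrite E eqxx.
Qed.

Lemma map_neq_mk2_0 m n n' (g : 'I_n -> 'I_n') (t : m.-tuple 'I_n) u v :
  (0 < m)%N -> (forall z, g z != u) -> map_tuple g t != mk2 m u v.
Proof.
move=> m1 gv; apply/eqP => /(congr1 (fun w => tnth w (Ordinal m1))).
rewrite tnth_map tnth_mk2 /= => E.
by move: (gv (tnth t (Ordinal m1))); rewrite E eqxx.
Qed.

Definition z0 : 'I_3 := @Ordinal 3 0 isT.
Definition z1 : 'I_3 := @Ordinal 3 1 isT.
Definition z2 : 'I_3 := @Ordinal 3 2 isT.
Definition w0 : 'I_2 := @Ordinal 2 0 isT.
Definition w1 : 'I_2 := @Ordinal 2 1 isT.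
Definition io1 (y : 'I_2) : 'I_3 := if val y == 0%N then z0 else z1.
Definition io2 (y : 'I_2) : 'I_3 := if val y == 0%N then z0 else z2.

Lemma io1_inj : injective io1.
Proof. by move=> [[|[|?]] ?] [[|[|?]] ?] //= _; apply: val_inj. Qed.
Lemma io2_inj : injective io2.
Proof. by move=> [[|[|?]] ?] [[|[|?]] ?] //= _; apply: val_inj. Qed.
Lemma io1_z2 z : io1 z != z2.
Proof. by rewrite /io1; case: ifP. Qed.
Lemma io2_z1 z : io2 z != z1.
Proof. by rewrite /io2; case: ifP. Qed.
Lemma io1_z2' z : io1 z != z2.
Proof. exact: io1_z2. Qed.
Lemma io1_sur z : z != z2 -> exists y, z = io1 y.
Proof.
case: z => [[|[|[|?]]] Hz] //= _; [exists w0|exists w1]; exact: val_inj.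
Qed.
Lemma io2_sur z : z != z1 -> exists y, z = io2 y.
Proof.
case: z => [[|[|[|?]]] Hz] //= _; [exists w0|exists w1]; exact: val_inj.
Qed.

Lemma factor (D C B : fs) h g : @is_embedding _ mu D C h -> @is_embedding _ mu B C g ->
  (forall x, exists y, h x = g y) -> embeds D B.
Proof.
move=> [hi hr] [gi gr] H.
pose p x := projT1 (cid (H x)).
have hp x : h x = g (p x) by rewrite /p; case: cid.
exists p; split.
  by move=> x y pxy; apply: hi; rewrite !hp pxy.
move=> i t; rewrite hr gr map_tuple_comp.
by rewrite (@map_tuple_ext _ _ _ h (g \o p)).
Qed.

Lemma emb_rel (X Y : fs) f i t : @is_embedding _ mu X Y f ->
  t \in relS X i -> map_tuple f t \in relS Y i.
Proof. by move=> [_ fr]; rewrite fr. Qed.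

Variables (i0 i1 : I).
Hypotheses (n01 : i0 <> i1) (m0 : (2 <= mu i0)%N) (m1 : (2 <= mu i1)%N).

Definition A2 : fs := @FStruct _ mu 2 (fun i =>
  if asbool (i = i1) then [set mk2 (mu i) w0 w1]%SET else finset.set0).
Definition B2 : fs := @FStruct _ mu 2 (fun i =>
  if asbool (i = i0) then [set mk2 (mu i) w0 w1]%SET else finset.set0).

Variable (j : I).
Hypotheses (nj0 : j <> i0) (nj1 : j <> i1) (mj : (2 <= mu j)%N).

Definition Cj : fs := @FStruct _ mu 3 (fun i =>
  if asbool (i = i0) then [set mk2 (mu i) z0 z1]%SET
  else if asbool (i = i1) then [set mk2 (mu i) z0 z2]%SET
  else if asbool (i = j) then [set mk2 (mu i) z1 z2]%SET
  else finset.set0).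

Lemma emb_B2 : @is_embedding _ mu B2 Cj io1.
Proof.
split; first exact: io1_inj.
move=> i t /=.
case: (asboolP (i = i0)) => [Hi|Hi].
  subst i; rewrite !finset.in_set1.
  rewrite -[mk2 _ z0 z1]/(mk2 _ (io1 w0) (io1 w1)) -map_mk2.
  by rewrite (inj_eq (map_tuple_inj (io1_inj))).
rewrite finset.in_set0.
case: (asboolP (i = i1)) => [Hi1|Hi1].
  subst i; rewrite finset.in_set1; apply/esym/negbTE.
  exact: map_neq_mk2_1 m1 io1_z2.
case: (asboolP (i = j)) => [Hj|Hj]; last by rewrite finset.in_set0.
subst i; rewrite finset.in_set1; apply/esym/negbTE.
exact: map_neq_mk2_1 mj io1_z2.
Qed.

Lemma emb_A2 : @is_embedding _ mu A2 Cj io2.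
Proof.
split; first exact: io2_inj.
move=> i t /=.
case: (asboolP (i = i0)) => [Hi|Hi].
  subst i; rewrite finset.in_set1 asboolF; last by [].
  rewrite finset.in_set0; apply/esym/negbTE.
  exact: map_neq_mk2_1 m0 io2_z1.
case: (asboolP (i = i1)) => [Hi1|Hi1].
  subst i; rewrite !finset.in_set1.
  rewrite -[mk2 _ z0 z2]/(mk2 _ (io2 w0) (io2 w1)) -map_mk2.
  by rewrite (inj_eq (map_tuple_inj (io2_inj))).
rewrite finset.in_set0.
case: (asboolP (i = j)) => [Hj|Hj]; last by rewrite finset.in_set0.
subst i; rewrite finset.in_set1; apply/esym/negbTE.
apply: map_neq_mk2_0 (ltnW mj) io2_z1.
Qed.

Lemma relCj i : relS Cj i != finset.set0 -> [\/ i = i0, i = i1 | i = j].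
Proof.
rewrite /=; case: (asboolP (i = i0)) => [|_]; first by constructor.
case: (asboolP (i = i1)) => [|_]; first by constructor.
case: (asboolP (i = j)) => [|_]; first by constructor.
by rewrite eqxx.
Qed.

Lemma below_Cj (D : fs) h : @is_embedding _ mu D Cj h ->
  relS D j = finset.set0 -> embeds D A2 \/ embeds D B2.
Proof.
move=> he Dj.
case: (pselect (exists x, h x = z1)) => [[x hx]|n1].
  right; apply: (factor he emb_B2) => x'; apply: io1_sur; apply/eqP => hx'.
  have : mk2 (mu j) x x' \in relS D j.
    rewrite he.2 map_mk2 hx hx' /= asboolF // asboolF // asboolT //.
    exact: finset.set11.
  by rewrite Dj finset.in_set0.
left; apply: (factor he emb_A2) => x'; apply: io2_sur; apply/eqP => hx'.
by apply: n1; exists x'.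
Qed.

End Fwd.

Section Main.
Variables (I : Type) (mu : I -> nat).
Hypothesis mu_pos : forall i, (0 < mu i)%N.
Local Notation fs := (fstruct mu).
Local Notation Om := (Omega mu).

Lemma principal (c : Om) : @ideals I mu (fun d => asbool (Omega_le d c)).
Proof.
split; [|split].
- exists c; apply/asboolP; exact: le_refl.
- move=> a b ab /asboolP bc; apply/asboolP; exact: le_trans ab bc.
- move=> a b /asboolP ac /asboolP bc; exists c; first by apply/asboolP; exact: le_refl.
  by split.
Qed.

Lemma rel_ne (X Y : fs) i : embeds X Y -> relS X i != finset.set0 -> relS Y i != finset.set0.
Proof.
move=> [f fe] /finset.set0Pn [t tin]; apply/finset.set0Pn.
by exists (map_tuple f t); exact: emb_rel fe tin.
Qed.

Lemma fwd : compact (@ideals I mu) -> finite_set [set i | (2 <= mu i)%N].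
Proof.
move=> cpt; have cl := compact_closed (@hausdorffX Om) cpt.
apply: contrapT => infS.
have [i0 Si0] : exists i0, (2 <= mu i0)%N.
  apply: contrapT => H; apply: infS; apply: (@sub_finite_set _ _ set0); last exact: finite_set0.
  by move=> i Si; apply: H; exists i.
have [i1 [Si1 n01]] : exists i1, (2 <= mu i1)%N /\ i0 <> i1.
  apply: contrapT => H; apply: infS; apply: (@sub_finite_set _ _ [set i0]); last exact: finite_set1.
  move=> i Si; apply: contrapT => ne; apply: H; exists i; split => // e; apply: ne; by rewrite e.
pose a := cls (A2 mu i1). pose b := cls (B2 mu i0).
pose f : {ptws Om -> bool} := fun d => asbool (Omega_le d a \/ Omega_le d b).
have : closure (@ideals I mu) f.
  apply/closure_cylP => K finK.
  pose onlyrel (d : Om) (i : I) := [/\ i <> i0, i <> i1, relS (rep d) i != finset.set0 &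
     forall i', i' <> i0 -> i' <> i1 -> relS (rep d) i' != finset.set0 -> i' = i].
  pose bad := [set i | exists2 d, K d & onlyrel d i].
  have finbad : finite_set bad.
    apply: (@sub_finite_set _ _ [set @xget {classic I} i0 (onlyrel d) | d in K]); last exact: finite_image.
    move=> i [d Kd oi]; exists d => //.
    have := @xgetPex {classic I} i0 (onlyrel d) (ex_intro _ i oi).
    by case: oi => _ _ _ U [h0 h1 hne _]; exact: U.
  have [j [Sj [nbj [nj0 nj1]]]] : exists j, (2 <= mu j)%N /\ ~ bad j /\ j <> i0 /\ j <> i1.
    apply: contrapT => H; apply: infS.
    apply: (@sub_finite_set _ _ (bad `|` [set i0; i1])).
      move=> i Si; case: (pselect (bad i)) => [bi|nbi]; first by left.
      case: (pselect (i = i0)) => [->|ni0]; first by right; left.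
      case: (pselect (i = i1)) => [->|ni1]; first by right; right.
      by exfalso; apply: H; exists i.
    by rewrite finite_setU; split => //; exact: finite_set2.
  pose c := cls (Cj mu i0 i1 j).
  exists (fun d => asbool (Omega_le d c)); split; first exact: principal.
  move=> d Kd; apply: asbool_equiv_eq; split.
    move=> /(le_mem (rep_mem d) (cls_mem _)) [h he].
    have Dj : relS (rep d) j = finset.set0.
      apply/eqP; apply: contrapT => ne; apply: nbj; exists d => //; split => //; first exact/negP.
      move=> i' n0 n1 ne'.
      have := @relCj _ mu i0 i1 j i' (rel_ne (ex_intro _ h he) ne').
      by case.
    case: (below_Cj n01 Si0 Si1 nj0 nj1 Sj he Dj) => [dA|dB].
      by left; apply/(le_mem (rep_mem d) (cls_mem _)).
    by right; apply/(le_mem (rep_mem d) (cls_mem _)).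
  case=> [da|db].
    apply: le_trans da _; apply/(le_mem (cls_mem _) (cls_mem _)).
    by exists io2; exact: (emb_A2 n01 Si0 Sj).
  apply: le_trans db _; apply/(le_mem (cls_mem _) (cls_mem _)).
  by exists io1; exact: (emb_B2 i0 Si1 Sj).
move=> /cl [_ [_ dir]].
have fa : [set x | f x] a by apply/asboolP; left; exact: le_refl.
have fb : [set x | f x] b by apply/asboolP; right; exact: le_refl.
have [c fc [ac bc]] := dir a b fa fb.
move/asboolP: fc => [ca|cb].
  have := le_trans bc ca; move/(le_mem (cls_mem _) (cls_mem _)) => /rel_ne.
  move=> /(_ i0); rewrite /= asboolT // asboolF //.
  have H1 : [set mk2 (mu i0) w0 w1]%SET != finset.set0.
    by apply/finset.set0Pn; exists (mk2 (mu i0) w0 w1); exact: finset.set11.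
  by move=> /(_ H1); rewrite eqxx.
have := le_trans ac cb; move/(le_mem (cls_mem _) (cls_mem _)) => /rel_ne.
move=> /(_ i1); rewrite /= asboolT // asboolF; last by move=> e; apply: n01.
have H1 : [set mk2 (mu i1) w0 w1]%SET != finset.set0.
  by apply/finset.set0Pn; exists (mk2 (mu i1) w0 w1); exact: finset.set11.
by move=> /(_ H1); rewrite eqxx.
Qed.

End Main.

Unset Implicit Arguments.
Set Strict Implicit.

Theorem lemma7 (I : Type) (mu : I -> nat) (mu_pos : forall i, (0 < mu i)%N) :
  compact (@ideals I mu) <-> finite_set [set i | (2 <= mu i)%N].
Proof.
split; first exact: fwd.
exact: back.
Qed.
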